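(* Let $N\ge2$ and ${\bm{p}}\in\Delta_K$ with $p_1\ge\dots\ge p_K>0$. Let $L_N({\bm{p}},{\bm{q}})=\sum_kp_k(1-q_k)^N$, let ${\bm{q}}^*(N)$ be its minimizer over ${\bm{q}}\in\Delta_K$, let $\beta_N>0$ be such that $q_k^*(N)=\max\{0,1-\beta_Np_k^{-1/(N-1)}\}$ for all $k$, and $K_N:=\max\{k:q_k^*(N)\ne0\}$. Then $$L^{\mathrm{same}}({\bm{p}}):=L_N({\bm{p}},{\bm{p}})=\sum_{k=1}^Kp_k(1-p_k)^N,$$ $$L^*({\bm{p}}):=L_N({\bm{p}},{\bm{q}}^*(N))=\sum_{k=K_N+1}^Kp_k+(K_N-1)\beta_N^{N-1}\in\left[\sum_{k=K_N+1}^Kp_k+(K_N-1)p_{K_N+1},\ \sum_{k=K_N+1}^Kp_k+(K_N-1)p_{K_N}\right),$$ with the convention $p_{K+1}=0$.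
   Context: $\Delta_K=\{{\bm{r}}\in\mathbb{R}^K:{\bm{r}}\ge0,\ \sum_kr_k=1\}$. $L_N$ is the expected test loss of the memorization model (error $1$ on task $k$ iff no sample from task $k$ among $N$ i.i.d. training samples from the mixture with proportions ${\bm{q}}$). *)

(* Defs.v *)
From mathcomp Require Import all_boot all_order all_algebra.
From mathcomp Require Import reals exp.
Set Implicit Arguments. Unset Strict Implicit. Unset Printing Implicit Defensive.
Import Order.TTheory GRing.Theory Num.Theory.
Local Open Scope ring_scope.

(* Vectors in R^K are represented as functions nat -> R, indexed 1..K
   (as in the paper); values outside 1..K are irrelevant. *)

Definition simplex {R : realType} (K : nat) (r : nat -> R) : Prop :=
  (forall k : nat, (1 <= k <= K)%N -> 0 <= r k) /\
  \sum_(1 <= k < K.+1) r k = 1.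

Definition LN {R : realType} (N K : nat) (p q : nat -> R) : R :=
  \sum_(1 <= k < K.+1) p k * (1 - q k) ^+ N.

(* K_N = max { k in 1..K : q_k <> 0 }  (0 if there is none) *)
Definition KN {R : realType} (K : nat) (q : nat -> R) : nat :=
  \max_(1 <= k < K.+1 | q k != 0) k.

Definition pext {R : realType} (K : nat) (p : nat -> R) (k : nat) : R :=
  if (k <= K)%N then p k else 0.

(* Main.v *)
Require Import Defs.
From mathcomp Require Import all_boot all_order all_algebra.
From mathcomp Require Import reals exp.
From mathcomp Require Import zify ring lra.
Import Order.TTheory GRing.Theory Num.Theory.
Local Open Scope ring_scope.

Lemma maxP (P : pred nat) n :
  (forall k, (1 <= k <= n)%N -> P k -> (k <= \max_(1 <= k < n.+1 | P k) k)%N) /\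
  ((\max_(1 <= k < n.+1 | P k) k) = 0%N \/
   ((1 <= \max_(1 <= k < n.+1 | P k) k <= n)%N /\ P (\max_(1 <= k < n.+1 | P k) k))).
Proof.
elim: n => [|n [IH1 IH2]].
  by rewrite big_geq //; split; [move=> k; lia | left].
rewrite big_mkcond big_nat_recr // -big_mkcond /=.
set m := \max_(1 <= k < n.+1 | P k) k in IH1 IH2 *.
have mn : (m <= n)%N by case: IH2 => [->|[]] //; lia.
case Pn: (P n.+1).
  have -> : maxn m n.+1 = n.+1 by lia.
  split; [move=> k; lia | right; split => //; lia].
have -> : maxn m 0 = m by lia.
split.
  move=> k Hk Pk; case: (k =P n.+1) => [E|E]; first by rewrite E Pn in Pk.
  apply: IH1 => //; lia.
case: IH2 => [->|[H1 H2]]; [by left | right; split => //; lia].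
Qed.

Theorem lemmaA8 (R : realType) (K N : nat) (p q : nat -> R) (beta : R) :
  (2 <= N)%N ->
  simplex K p ->
  (forall k : nat, (1 <= k)%N -> (k < K)%N -> p k.+1 <= p k) ->
  (forall k : nat, (1 <= k <= K)%N -> 0 < p k) ->
  (* q is the minimizer q*(N) of L_N(p, .) over the simplex *)
  simplex K q ->
  (forall r : nat -> R, simplex K r -> LN N K p q <= LN N K p r) ->
  0 < beta ->
  (forall k : nat, (1 <= k <= K)%N ->
     q k = Num.max 0 (1 - beta * powR (p k) (- (N.-1)%:R^-1))) ->
  LN N K p p = \sum_(1 <= k < K.+1) p k * (1 - p k) ^+ N /\
  LN N K p q = \sum_((KN K q).+1 <= k < K.+1) p k
               + ((KN K q)%:R - 1) * beta ^+ N.-1 /\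
  \sum_((KN K q).+1 <= k < K.+1) p k + ((KN K q)%:R - 1) * pext K p (KN K q).+1
    <= LN N K p q /\
  LN N K p q < \sum_((KN K q).+1 <= k < K.+1) p k
               + ((KN K q)%:R - 1) * p (KN K q).
Proof.
move=> HN [p0 psum] pmono ppos [q0 qsum] _ bpos qdef.
split; first by [].
have [m1 m2] := maxP (fun k => q k != 0) K.
have m1' : forall k, (1 <= k <= K)%N -> q k != 0 -> (k <= KN K q)%N := m1.
have m2' : KN K q = 0%N \/ ((1 <= KN K q <= K)%N /\ q (KN K q) != 0) := m2.
clear m1 m2.
set m := KN K q in m1' m2' *.
set n := N.-1.
have HNn : N = n.+1 by rewrite /n; lia.
set c : R := n%:R^-1.
set g := fun k => powR (p k) c.
have gpos k : (1 <= k <= K)%N -> 0 < g k.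
  by move=> Hk; apply: powR_gt0; apply: ppos.
have gpow k : (1 <= k <= K)%N -> g k ^+ n = p k.
  move=> Hk; rewrite /g -powR_mulrn ?powR_ge0 // -powRrM mulVf ?powRr1 //.
    exact: ltW (ppos _ Hk).
  by rewrite pnatr_eq0; lia.
have qdef' k : (1 <= k <= K)%N -> q k = Num.max 0 (1 - beta / g k).
  by move=> Hk; rewrite qdef // powRN.
have pmono' : forall k l, (1 <= k)%N -> (k <= l)%N -> (l <= K)%N -> p l <= p k.
  move=> k l k1; elim: l => [|l IH] kl lK; first lia.
  case: (k =P l.+1) => [<-//|ne].
  apply: le_trans (pmono l _ _) (IH _ _); lia.
have gmono k l : (1 <= k)%N -> (k <= l)%N -> (l <= K)%N -> g l <= g k.
  move=> k1 kl lK; apply: (ge0_ler_powR _ _ _ (pmono' _ _ k1 kl lK)).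
  - by rewrite invr_ge0 ler0n.
  - by rewrite nnegrE ltW // ppos //; lia.
  - by rewrite nnegrE ltW // ppos //; lia.
have mK : (m <= K)%N by case: m2' => [->|[]] //; lia.
have qpos k : (1 <= k <= m)%N -> q k = 1 - beta / g k /\ beta / g k < 1.
  move=> Hk.
  have [m1 qm] : (1 <= m <= K)%N /\ q m != 0 by case: m2' => [E|//]; lia.
  have hm : 0 < 1 - beta / g m.
    move: qm; rewrite qdef' //; case: (lerP (1 - beta / g m) 0) => // H.
    by rewrite eqxx.
  have hk : beta / g k <= beta / g m.
    rewrite ler_pM2l // lef_pV2 ?posrE ?gpos //; try lia.
    by apply: gmono; lia.
  have hk' : 0 < 1 - beta / g k by lra.
  by rewrite qdef' ?(max_idPr (ltW hk')) //; [split => //; lra | lia].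
have qzero k : (m < k <= K)%N -> q k = 0 /\ 1 <= beta / g k.
  move=> Hk.
  have qk : q k = 0.
    apply/eqP; apply: contraT => H; have := m1' k _ H; lia.
  split => //; move: qk; rewrite qdef' //; last lia.
  case: (lerP (1 - beta / g k) 0) => H; first lra.
  by move=> E; lra.
have splitS (F : nat -> R) : \sum_(1 <= k < K.+1) F k =
    \sum_(1 <= k < m.+1) F k + \sum_(m.+1 <= k < K.+1) F k.
  by rewrite (big_cat_nat _ (n:=m.+1)) //; lia.
set S := \sum_(1 <= k < m.+1) (g k)^-1.
have hS : m%:R - beta * S = 1.
  apply: (etrans _ qsum); rewrite splitS.
  have -> : \sum_(m.+1 <= k < K.+1) q k = 0.
    rewrite big_nat_cond big1 // => k /andP[/andP[a b] _]; apply qzero; lia.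
  rewrite addr0 /S mulr_sumr.
  have -> : m%:R = \sum_(1 <= k < m.+1) (1:R) by rewrite sumr_const_nat subn1.
  rewrite -sumrB.
  apply: eq_big_nat => k Hk; rewrite (qpos k _).1 //; lia.
have m1 : (1 <= m)%N.
  case: (posnP m) => [E|//]; move: hS; rewrite /S E big_geq //= mulr0; lra.
have Spos : 0 < S.
  rewrite /S big_nat_recr //=; apply: ltr_wpDl.
    rewrite big_nat_cond; apply: sumr_ge0 => k /andP[/andP[a b] _].
    by rewrite invr_ge0 ltW // gpos //; lia.
  by rewrite invr_gt0 gpos //; lia.
have mpos : 0 < m%:R - 1 :> R.
  have : 0 < beta * S by apply: mulr_gt0.
  lra.
have hLN : LN N K p q = \sum_(m.+1 <= k < K.+1) p k + (m%:R - 1) * beta ^+ n.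
  rewrite /LN splitS addrC.
  have -> : \sum_(m.+1 <= k < K.+1) p k * (1 - q k) ^+ N =
            \sum_(m.+1 <= k < K.+1) p k.
    apply: eq_big_nat => k Hk; rewrite (qzero k _).1; last lia.
    by rewrite subr0 expr1n mulr1.
  congr (_ + _).
  have -> : \sum_(1 <= k < m.+1) p k * (1 - q k) ^+ N =
            \sum_(1 <= k < m.+1) beta ^+ n.+1 * (g k)^-1.
    apply: eq_big_nat => k Hk; rewrite (qpos k _).1; last lia.
    have gk : g k != 0 by rewrite gt_eqF // gpos //; lia.
    rewrite -(gpow k); last lia.
    rewrite HNn opprB addrC subrK expr_div_n exprS [g k ^+ n.+1]exprS.
    by field; rewrite gk expf_neq0.
  rewrite -mulr_sumr -/S.
  have bS : beta * S = m%:R - 1 by lra.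
  by rewrite exprSr -mulrA bS mulrC.
rewrite hLN; split; first by rewrite /n.
split.
  have hkey : (m%:R - 1) * pext K p m.+1 <= (m%:R - 1) * beta ^+ n.
    rewrite ler_pM2l //.
    rewrite /pext; case: ifP => H; last by rewrite exprn_ge0 // ltW.
    have [_ hb] := qzero m.+1 (ltac:(lia)).
    move: hb; rewrite ler_pdivlMr ?gpos; last lia.
    rewrite mul1r => hb.
    rewrite -gpow; last lia.
    by apply: lerXn2r => //; rewrite nnegrE ?(ltW (gpos _ _)) //; first [done | lia | exact: le_trans (ltW (gpos _ _)) hb].
    by [].
  by apply: lerD.
have hkey : (m%:R - 1) * beta ^+ n < (m%:R - 1) * p m.
  rewrite ltr_pM2l //.
  have [_ hb] := qpos m (ltac:(lia)).
  move: hb; rewrite ltr_pdivrMr ?gpos; last lia.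
  rewrite mul1r => hb.
  rewrite -gpow; last lia.
  by rewrite ltrXn2r ?ltW //; lia.
  by [].
by apply: ler_ltD.
Qed.
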